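(* Let $f\in\mathrm{Homeo}(\mathbb T^2)$ be semiconjugate to a rigid rotation $R_\rho$ of $\mathbb S^1$, and let $\Omega\subset\mathbb T^2$ be an $f$-invariant externally transitive set. Then for any two semiconjugacies $h_1,h_2$ from $f$ to $R_\rho$ there is a rigid rotation $R$ of $\mathbb S^1$ with $h_1|_\Omega=(R\circ h_2)|_\Omega$.
   Context: A semiconjugacy from $f$ to $R_\rho(x)=x+\rho$ is a continuous surjection $h:\mathbb T^2\to\mathbb S^1$ with $h\circ f=R_\rho\circ h$. An $f$-invariant set $\Omega$ is externally transitive if for all $x,y\in\Omega$ and neighbourhoods $U_x,U_y$ of $x,y$ in $\mathbb T^2$ there is $n\in\mathbb N$ with $f^n(U_x)\cap U_y\neq\emptyset$. *)

(* Defs.v *)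
From Stdlib Require Import Reals Lra.
Open Scope R_scope.

(** The circle S^1 = R/Z, represented by the fundamental domain [0,1). *)
Definition S1 : Type := {x : R | 0 <= x < 1}.

Lemma frac_part_in (x : R) : 0 <= frac_part x < 1.
Proof. destruct (base_fp x) as [H1 H2]. lra. Qed.

Definition S1_of (x : R) : S1 := exist _ (frac_part x) (frac_part_in x).

Definition rot (rho : R) (x : S1) : S1 := S1_of (proj1_sig x + rho).

Definition dS1 (x y : S1) : R :=
  let d := Rabs (proj1_sig x - proj1_sig y) in Rmin d (1 - d).

Definition T2 : Type := (S1 * S1)%type.
Definition dT2 (p q : T2) : R := Rmax (dS1 (fst p) (fst q)) (dS1 (snd p) (snd q)).

Definition continuous_metric {X Y : Type} (dX : X -> X -> R) (dY : Y -> Y -> R)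
  (g : X -> Y) : Prop :=
  forall x eps, 0 < eps -> exists delta, 0 < delta /\
    forall y, dX x y < delta -> dY (g x) (g y) < eps.

Definition homeo_T2 (f : T2 -> T2) : Prop :=
  exists g : T2 -> T2,
    (forall x, g (f x) = x) /\ (forall y, f (g y) = y) /\
    continuous_metric dT2 dT2 f /\ continuous_metric dT2 dT2 g.

Definition semiconjugacy (f : T2 -> T2) (rho : R) (h : T2 -> S1) : Prop :=
  continuous_metric dT2 dS1 h /\
  (forall y : S1, exists x : T2, h x = y) /\
  (forall x, h (f x) = rot rho (h x)).

Definition invariant (f : T2 -> T2) (Omega : T2 -> Prop) : Prop :=
  (forall x, Omega x -> Omega (f x)) /\
  (forall y, Omega y -> exists x, Omega x /\ f x = y).

Definition nbhd (U : T2 -> Prop) (x : T2) : Prop :=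
  exists eps, 0 < eps /\ forall y, dT2 x y < eps -> U y.

Definition externally_transitive (f : T2 -> T2) (Omega : T2 -> Prop) : Prop :=
  forall x y, Omega x -> Omega y ->
  forall Ux Uy, nbhd Ux x -> nbhd Uy y ->
  exists n : nat, (1 <= n)%nat /\ exists z, Ux z /\ Uy (Nat.iter n f z).

(* Main.v *)
Require Import Defs.
From Stdlib Require Import Reals Lra Lia ZArith Classical.
Open Scope R_scope.

Definition closeR (e u v : R) : Prop := exists k : Z, Rabs (u - v - IZR k) < e.
Definition eqm (u v : R) : Prop := exists k : Z, u - v = IZR k.

Lemma close_trans e1 e2 u v w : closeR e1 u v -> closeR e2 v w -> closeR (e1+e2) u w.
Proof.
  intros [k1 H1] [k2 H2]. exists (k1+k2)%Z. rewrite plus_IZR.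
  replace (u - w - (IZR k1 + IZR k2)) with ((u - v - IZR k1) + (v - w - IZR k2)) by ring.
  eapply Rle_lt_trans. apply Rabs_triang. lra.
Qed.

Lemma close_eqm e u v w : closeR e u v -> eqm v w -> closeR e u w.
Proof.
  intros [k1 H1] [k2 H2]. exists (k1+k2)%Z. rewrite plus_IZR.
  replace (u - w - (IZR k1 + IZR k2)) with (u - v - IZR k1) by lra. exact H1.
Qed.

Lemma close_sym e u v : closeR e u v -> closeR e v u.
Proof.
  intros [k H]. exists (-k)%Z. rewrite opp_IZR.
  replace (v - u - - IZR k) with (- (u - v - IZR k)) by ring. rewrite Rabs_Ropp. exact H.
Qed.

Lemma eqm_sym u v : eqm u v -> eqm v u.
Proof. intros [k H]. exists (-k)%Z. rewrite opp_IZR. lra. Qed.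

Lemma eqm_trans u v w : eqm u v -> eqm v w -> eqm u w.
Proof. intros [k1 H1] [k2 H2]. exists (k1+k2)%Z. rewrite plus_IZR. lra. Qed.

Lemma eqm_frac r : eqm (frac_part r) r.
Proof. exists (- Int_part r)%Z. unfold frac_part. rewrite opp_IZR. ring. Qed.

Lemma dS1_close e p q : dS1 p q < e -> closeR e (proj1_sig p) (proj1_sig q).
Proof.
  destruct p as [a Ha], q as [b Hb]. unfold dS1; simpl. unfold Rmin.
  destruct (Rle_dec _ _) as [Hle|Hle]; intro H.
  - exists 0%Z. replace (a - b - IZR 0) with (a - b) by (simpl; ring). exact H.
  - unfold Rabs in H |- *. destruct (Rcase_abs (a - b)).
    + exists (-1)%Z. replace (IZR (-1)) with (-1) by (simpl; ring). rewrite Rabs_pos_eq; lra.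
    + exists 1%Z. replace (IZR 1) with 1 by (simpl; ring). rewrite Rabs_left1; lra.
Qed.

Lemma int_small a b k : 0 <= a < 1 -> 0 <= b < 1 -> a - b = IZR k -> a = b.
Proof.
  intros Ha Hb H.
  assert (k = 0%Z).
  { assert (-1 < k)%Z by (apply lt_IZR; simpl; lra).
    assert (k < 1)%Z by (apply lt_IZR; simpl; lra). lia. }
  subst. simpl in H. lra.
Qed.

Lemma closeall a b : 0 <= a < 1 -> 0 <= b < 1 -> (forall e, 0 < e -> closeR e a b) -> a = b.
Proof.
  intros Ha Hb H. destruct (Req_dec a b) as [|Hne]; auto. exfalso.
  set (m := Rmin (Rabs (a-b)) (Rmin (1 - (a-b)) (1 + (a-b)))).
  assert (Hm: 0 < m).
  { unfold m. apply Rmin_pos. apply Rabs_pos_lt. lra. apply Rmin_pos; lra. }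
  destruct (H m Hm) as [k Hk].
  assert (m <= Rabs (a-b)) by apply Rmin_l.
  assert (m <= 1 - (a-b)) by (eapply Rle_trans; [apply Rmin_r| apply Rmin_l]).
  assert (m <= 1 + (a-b)) by (eapply Rle_trans; [apply Rmin_r| apply Rmin_r]).
  destruct (Z.lt_trichotomy k 0) as [Hk0|[Hk0|Hk0]].
  - assert (IZR k <= -1) by (apply IZR_le; lia).
    unfold Rabs in Hk. destruct (Rcase_abs (a - b - IZR k)); lra.
  - subst. simpl in Hk. replace (a - b - 0) with (a-b) in Hk by ring. lra.
  - assert (1 <= IZR k) by (apply IZR_le; lia).
    unfold Rabs in Hk. destruct (Rcase_abs (a - b - IZR k)); lra.
Qed.

Theorem mainTheorem7 (f : T2 -> T2) (rho : R) (Omega : T2 -> Prop)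
  (h1 h2 : T2 -> S1) :
  homeo_T2 f ->
  semiconjugacy f rho h1 ->
  semiconjugacy f rho h2 ->
  invariant f Omega ->
  externally_transitive f Omega ->
  exists r : R, forall x, Omega x -> h1 x = rot r (h2 x).
Proof.
  intros _ [C1 [_ E1]] [C2 [_ E2]] _ ET.
  set (D := fun w => proj1_sig (h1 w) - proj1_sig (h2 w)).
  assert (Df : forall w, eqm (D (f w)) (D w)).
  { intro w. unfold D. rewrite E1, E2. unfold rot, S1_of; simpl.
    destruct (eqm_frac (proj1_sig (h1 w) + rho)) as [k1 H1].
    destruct (eqm_frac (proj1_sig (h2 w) + rho)) as [k2 H2].
    exists (k1 - k2)%Z. rewrite minus_IZR. lra. }
  assert (Dn : forall n w, eqm (D (Nat.iter n f w)) (D w)).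
  { induction n; intro w; simpl. exists 0%Z; simpl; ring.
    eapply eqm_trans. apply Df. apply IHn. }
  assert (Key : forall x y, Omega x -> Omega y -> eqm (D x) (D y)).
  { intros x y Ox Oy.
    assert (forall e, 0 < e -> closeR e (D x) (D y)) as Hc.
    { intros e He.
      destruct (C1 x (e/4)) as [d1 [Hd1 P1]]; [lra|].
      destruct (C2 x (e/4)) as [d2 [Hd2 P2]]; [lra|].
      destruct (C1 y (e/4)) as [d3 [Hd3 P3]]; [lra|].
      destruct (C2 y (e/4)) as [d4 [Hd4 P4]]; [lra|].
      destruct (ET x y Ox Oy (fun w => dT2 x w < Rmin d1 d2) (fun w => dT2 y w < Rmin d3 d4))
        as [n [_ [z [Hz1 Hz2]]]].
      - exists (Rmin d1 d2). split; auto. apply Rmin_pos; auto.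
      - exists (Rmin d3 d4). split; auto. apply Rmin_pos; auto.
      - set (w := Nat.iter n f z) in *.
        assert (A1 := dS1_close _ _ _ (P1 z (Rlt_le_trans _ _ _ Hz1 (Rmin_l _ _)))).
        assert (A2 := dS1_close _ _ _ (P2 z (Rlt_le_trans _ _ _ Hz1 (Rmin_r _ _)))).
        assert (A3 := dS1_close _ _ _ (P3 w (Rlt_le_trans _ _ _ Hz2 (Rmin_l _ _)))).
        assert (A4 := dS1_close _ _ _ (P4 w (Rlt_le_trans _ _ _ Hz2 (Rmin_r _ _)))).
        assert (Hxz : closeR (e/4 + e/4) (D x) (D z)).
        { destruct A1 as [k1 K1], A2 as [k2 K2]. exists (k1 - k2)%Z. rewrite minus_IZR.
          unfold D. replace (proj1_sig (h1 x) - proj1_sig (h2 x) - (proj1_sig (h1 z) - proj1_sig (h2 z)) - (IZR k1 - IZR k2))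
            with ((proj1_sig (h1 x) - proj1_sig (h1 z) - IZR k1) + - (proj1_sig (h2 x) - proj1_sig (h2 z) - IZR k2)) by ring.
          eapply Rle_lt_trans. apply Rabs_triang. rewrite Rabs_Ropp. lra. }
        assert (Hyw : closeR (e/4 + e/4) (D y) (D w)).
        { destruct A3 as [k1 K1], A4 as [k2 K2]. exists (k1 - k2)%Z. rewrite minus_IZR.
          unfold D. replace (proj1_sig (h1 y) - proj1_sig (h2 y) - (proj1_sig (h1 w) - proj1_sig (h2 w)) - (IZR k1 - IZR k2))
            with ((proj1_sig (h1 y) - proj1_sig (h1 w) - IZR k1) + - (proj1_sig (h2 y) - proj1_sig (h2 w) - IZR k2)) by ring.
          eapply Rle_lt_trans. apply Rabs_triang. rewrite Rabs_Ropp. lra. }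
        replace e with ((e/4 + e/4) + (e/4 + e/4)) by field.
        eapply close_trans. eapply close_eqm. exact Hxz. apply eqm_sym. apply Dn.
        apply close_sym. exact Hyw. }
    assert (Hf : frac_part (D x) = frac_part (D y)).
    { apply closeall; try apply frac_part_in. intros e He.
      eapply close_eqm. 2: apply eqm_sym, eqm_frac.
      apply close_sym. eapply close_eqm. 2: apply eqm_sym, eqm_frac.
      apply close_sym. auto. }
    eapply eqm_trans. apply eqm_sym, eqm_frac. rewrite Hf. apply eqm_frac. }
  destruct (classic (exists x0, Omega x0)) as [[x0 O0]|NE].
  - exists (D x0). intros x Ox.
    destruct (Key x x0 Ox O0) as [k Hk].
    unfold rot, S1_of. destruct (h1 x) as [a Ha] eqn:Eh.
    assert (Ef : frac_part (proj1_sig (h2 x) + D x0) = a).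
    { destruct (eqm_frac (proj1_sig (h2 x) + D x0)) as [j Hj].
      apply (int_small _ _ (j - k)); auto. apply frac_part_in.
      rewrite minus_IZR. unfold D in Hk. rewrite Eh in Hk. simpl in Hk. unfold D in Hj |- *. cbv beta in *. lra. }
    revert Ha Eh. rewrite <- Ef. intros Ha Eh. f_equal. apply proof_irrelevance.
  - exists 0. intros x Ox. exfalso. apply NE. eauto.
Qed.
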